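(* Let $A$ be a primitive axial algebra of Jordan type $\tfrac12$ and let $a,b$ be distinct $\tfrac12$-axes. Assume $N_{a,b}$ is contained in a $3$-dimensional subalgebra $M$ of $A$ having an identity element $\mathbf e$. Then the following are equivalent: (a) $ab=-\tfrac38\mathbf e+\tfrac12a+\tfrac12b$; (b) $a^{\tau(b)}=b^{\tau(a)}$. If they hold, then $|\tau(a)\tau(b)|=3$; if moreover $\operatorname{char}\mathbb F\ne3$, then $\mathbf e$ is the identity element of $N_{a,b}$ (so $N_{a,b}=M$). Furthermore, if in addition $c:=\mathbf e-b$ is a $\tfrac12$-axis, then $N_{a,c}$ is $3$-dimensional and $ac=-\tfrac18\mathbf e+\tfrac12a+\tfrac12c$; when $\operatorname{char}\mathbb F\ne3$ one has $N_{a,c}=N_{a,b}$, while when $\operatorname{char}\mathbb F=3$ one has $N_{a,b}\subsetneq N_{a,c}$.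
   Context: $\mathbb F$ is a field of characteristic $\neq 2$. For a commutative $\mathbb F$-algebra $A$, $a\in A$, $\lambda\in\mathbb F$, put $A_\lambda(a)=\{x: xa=\lambda x\}$. A $\tfrac12$-axis is an idempotent $a$ with $A=A_1(a)\oplus A_0(a)\oplus A_{1/2}(a)$, $A_1(a)=\mathbb F a$, and with $A_+(a)=A_1(a)\oplus A_0(a)$, $A_-(a)=A_{1/2}(a)$ satisfying $A_+A_+\subseteq A_+$, $A_+A_-\subseteq A_-$, $A_-A_-\subseteq A_+$, $A_0(a)A_0(a)\subseteq A_0(a)$. A primitive axial algebra of Jordan type $\tfrac12$ is a commutative algebra generated by $\tfrac12$-axes. The Miyamoto involution $\tau(a)$ acts as $1$ on $A_+(a)$ and $-1$ on $A_-(a)$. $N_{x,y}$ is the subalgebra generated by $x,y$; an identity element of a subalgebra $N$ is $\mathbf 1\in N$ with $\mathbf 1n=n$ for all $n\in N$. *)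

(* Defs.v *)
From HB Require Import structures.
From mathcomp Require Import all_boot all_order all_algebra.
Set Implicit Arguments. Unset Strict Implicit. Unset Printing Implicit Defensive.
Import Order.TTheory GRing.Theory Num.Theory.
Local Open Scope ring_scope.

Section AxialDefs.
Variables (F : fieldType) (V : lmodType F) (mul : V -> V -> V).

Definition comm_algebra : Prop :=
  [/\ forall x y, mul x y = mul y x,
      forall x y z, mul x (y + z) = mul x y + mul x z &
      forall (k : F) x y, mul x (k *: y) = k *: mul x y].

Definition eig (a : V) (l : F) (x : V) : Prop := mul x a = l *: x.

Definition Aplus (a x : V) : Prop :=
  exists x1 x0, [/\ eig a 1 x1, eig a 0 x0 & x = x1 + x0].
Definition Aminus (a x : V) : Prop := eig a (2^-1) x.

Definition half_axis (a : V) : Prop :=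
  [/\ mul a a = a,
      (* A = A_1(a) + A_0(a) + A_{1/2}(a) (the sum of eigenspaces is automatically direct) *)
      forall x, exists x1 x0 xh,
        [/\ eig a 1 x1, eig a 0 x0, eig a (2^-1) xh & x = x1 + x0 + xh],
      forall x, eig a 1 x <-> exists k : F, x = k *: a &
      [/\ forall x y, Aplus a x -> Aplus a y -> Aplus a (mul x y),
          forall x y, Aplus a x -> Aminus a y -> Aminus a (mul x y),
          forall x y, Aminus a x -> Aminus a y -> Aplus a (mul x y) &
          forall x y, eig a 0 x -> eig a 0 y -> eig a 0 (mul x y)]].

Definition subalgebra (S : V -> Prop) : Prop :=
  [/\ S 0,
      forall x y, S x -> S y -> S (x + y),
      forall (k : F) x, S x -> S (k *: x) &
      forall x y, S x -> S y -> S (mul x y)].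

Definition primitive_axial_half : Prop :=
  forall S, subalgebra S -> (forall x, half_axis x -> S x) -> forall v, S v.

Definition Ngen (x y : V) (v : V) : Prop :=
  forall S, subalgebra S -> S x -> S y -> S v.

Definition dim3 (S : V -> Prop) : Prop :=
  exists m1 m2 m3, [/\ S m1, S m2, S m3,
    forall k1 k2 k3 : F, k1 *: m1 + k2 *: m2 + k3 *: m3 = 0 ->
        [/\ k1 = 0, k2 = 0 & k3 = 0] &
    forall v, S v -> exists k1 k2 k3 : F, v = k1 *: m1 + k2 *: m2 + k3 *: m3].

(* t is the Miyamoto involution tau(a): 1 on A_+(a), -1 on A_-(a).
   Since A = A_+(a) + A_-(a) for a 1/2-axis, this determines t uniquely. *)
Definition miyamoto (a : V) (t : V -> V) : Prop :=
  forall xp xm, Aplus a xp -> Aminus a xm -> t (xp + xm) = xp - xm.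

Definition is_identity_of (S : V -> Prop) (e : V) : Prop :=
  S e /\ forall n, S n -> mul e n = n.

End AxialDefs.

Definition has_order (T : Type) (f : T -> T) (n : nat) : Prop :=
  [/\ (0 < n)%N, forall x, iter n f x = x &
      forall m, (0 < m < n)%N -> exists x, iter m f x <> x].

(* Main.v *)
Require Import Defs.
From HB Require Import structures.
From mathcomp Require Import all_boot all_order all_algebra.
From mathcomp Require Import ring.
Import Order.TTheory GRing.Theory Num.Theory.
Local Open Scope ring_scope.
Set Implicit Arguments. Unset Strict Implicit.

Section Lin.
Variables (F : fieldType) (V : lmodType F).

Lemma lc3_pack (u1 u2 u3 : V) : exists L : F -> F -> F -> V,
  [/\ (forall k1 k2 k3 l1 l2 l3, L k1 k2 k3 + L l1 l2 l3 = L (k1+l1) (k2+l2) (k3+l3)),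
      (forall c k1 k2 k3, c *: L k1 k2 k3 = L (c*k1) (c*k2) (c*k3)),
      (forall k1 k2 k3, - L k1 k2 k3 = L (-k1) (-k2) (-k3)),
      (forall k1 k2 k3 l1 l2 l3, k1 = l1 -> k2 = l2 -> k3 = l3 -> L k1 k2 k3 = L l1 l2 l3) &
      [/\ u1 = L 1 0 0, u2 = L 0 1 0, u3 = L 0 0 1 & 0 = L 0 0 0]].
Proof.
exists (fun k1 k2 k3 => k1 *: u1 + k2 *: u2 + k3 *: u3); split.
- by move=> *; rewrite !scalerDl addrACA [X in X + _ = _]addrACA.

- by move=> *; rewrite !scalerDr !scalerA.
- by move=> *; rewrite !opprD -!scaleNr.
- by move=> *; subst.
- by split; rewrite ?scale1r ?scale0r ?addr0 ?add0r.
Qed.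
End Lin.

Lemma lc6_pack (F : fieldType) (V : lmodType F) (u1 u2 u3 u4 u5 u6 : V) :
  exists L : F -> F -> F -> F -> F -> F -> V,
  [/\ (forall k1 k2 k3 k4 k5 k6 l1 l2 l3 l4 l5 l6,
        L k1 k2 k3 k4 k5 k6 + L l1 l2 l3 l4 l5 l6 = L (k1+l1) (k2+l2) (k3+l3) (k4+l4) (k5+l5) (k6+l6)),
      (forall c k1 k2 k3 k4 k5 k6, c *: L k1 k2 k3 k4 k5 k6 = L (c*k1) (c*k2) (c*k3) (c*k4) (c*k5) (c*k6)),
      (forall k1 k2 k3 k4 k5 k6, - L k1 k2 k3 k4 k5 k6 = L (-k1) (-k2) (-k3) (-k4) (-k5) (-k6)),
      (forall k1 k2 k3 k4 k5 k6 l1 l2 l3 l4 l5 l6, k1 = l1 -> k2 = l2 -> k3 = l3 ->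
          k4 = l4 -> k5 = l5 -> k6 = l6 -> L k1 k2 k3 k4 k5 k6 = L l1 l2 l3 l4 l5 l6) &
      [/\ u1 = L 1 0 0 0 0 0, u2 = L 0 1 0 0 0 0, u3 = L 0 0 1 0 0 0 &
          [/\ u4 = L 0 0 0 1 0 0, u5 = L 0 0 0 0 1 0 & u6 = L 0 0 0 0 0 1]]].
Proof.
have [L [LD LZ LN Leq [L1 L2 L3 L0]]] := lc3_pack u1 u2 u3.
have [K [KD KZ KN Keq [K1 K2 K3 K0]]] := lc3_pack u4 u5 u6.
exists (fun k1 k2 k3 k4 k5 k6 => L k1 k2 k3 + K k4 k5 k6); split.
- by move=> *; rewrite addrACA LD KD.
- by move=> *; rewrite scalerDr LZ KZ.
- by move=> *; rewrite opprD LN KN.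
- by move=> *; subst.
- by split; [| | | split]; rewrite -?L0 -?K0 ?addr0 ?add0r.
Qed.
Lemma dep4 (F : fieldType) (V : lmodType F) (m1 m2 m3 v1 v2 v3 v4 : V)
  c11 c12 c13 c21 c22 c23 c31 c32 c33 c41 c42 c43 :
  v1 = c11 *: m1 + c12 *: m2 + c13 *: m3 ->
  v2 = c21 *: m1 + c22 *: m2 + c23 *: m3 ->
  v3 = c31 *: m1 + c32 *: m2 + c33 *: m3 ->
  v4 = c41 *: m1 + c42 *: m2 + c43 *: m3 ->
  exists k1 k2 k3 k4 : F, ~~ [&& k1 == 0, k2 == 0, k3 == 0 & k4 == 0] /\
    k1 *: v1 + k2 *: v2 + k3 *: v3 + k4 *: v4 = 0.
Proof.
move=> E1 E2 E3 E4.
pose A := \matrix_(i < 4, j < 3) nth 0 (nth [::] [:: [:: c11;c12;c13]; [:: c21;c22;c23];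
   [::c31;c32;c33]; [::c41;c42;c43]] i) j.
have nrf : ~~ row_free A.
  by rewrite /row_free; have := rank_leq_col A; case: eqP => // ->.
rewrite -kermx_eq0 in nrf.
have [i Hi] : exists i, row i (kermx A) != 0.
  apply/existsP; apply: contraR nrf; rewrite negb_exists => /forallP H.
  by apply/eqP/row_matrixP => i; rewrite row0; apply/eqP; move: (H i); rewrite negbK.
set u := row i (kermx A) in Hi.
have uA : u *m A = 0 by rewrite -row_mul mulmx_ker row0.
clearbody u.
have ej := fun j => congr1 (fun M : 'M_(1,3) => M ord0 j) uA.
have e1 := ej ord0. have e2 := ej (lift ord0 ord0). have e3 := ej (lift ord0 (lift ord0 ord0)).
rewrite /= !mxE !big_ord_recl !big_ord0 /= !mxE /= in e1 e2 e3.
have Hnz : ~~ [&& u ord0 ord0 == 0, u ord0 (lift ord0 ord0) == 0, u ord0 (lift ord0 (lift ord0 ord0)) == 0 &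
  u ord0 (lift ord0 (lift ord0 (lift ord0 ord0))) == 0].
  apply: contra Hi => /and4P [/eqP h1 /eqP h2 /eqP h3 /eqP h4].
  apply/eqP/rowP => j; rewrite mxE.
  case: j => [[|[|[|[|j]]]] Hj] //.
  - by rewrite -h1; congr (u _ _); apply: val_inj.
  - by rewrite -h2; congr (u _ _); apply: val_inj.
  - by rewrite -h3; congr (u _ _); apply: val_inj.
  - by rewrite -h4; congr (u _ _); apply: val_inj.
move: Hnz e1 e2 e3.
move: (u ord0 ord0) (u ord0 (lift ord0 ord0)) (u ord0 (lift ord0 (lift ord0 ord0)))
  (u ord0 (lift ord0 (lift ord0 (lift ord0 ord0)))) => k1 k2 k3 k4 Hnz e1 e2 e3.
exists k1, k2, k3, k4; split => //.
have [L [LD LZ LN Leq [La Lb Lc L0]]] := lc3_pack m1 m2 m3.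
rewrite E1 E2 E3 E4 La Lb Lc L0; repeat rewrite ?LD ?LZ ?LN.
have H : forall x y : F, x = y -> y = 0 -> x = 0 by move=> ? ? ->.
apply: Leq.
- by apply: (H _ _ _ e1); ring.
- by apply: (H _ _ _ e2); ring.
- by apply: (H _ _ _ e3); ring.
Qed.

Lemma span3 (F : fieldType) (V : lmodType F) (S : V -> Prop) u1 u2 u3 :
  dim3 S -> S u1 -> S u2 -> S u3 ->
  (forall k1 k2 k3, k1 *: u1 + k2 *: u2 + k3 *: u3 = 0 -> [/\ k1 = 0, k2 = 0 & k3 = 0]) ->
  forall v, S v -> exists k1 k2 k3, v = k1 *: u1 + k2 *: u2 + k3 *: u3.
Proof.
case=> m1 [m2 [m3 [_ _ _ _ Hsp]]] S1 S2 S3 Hind v Sv.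
have [c11 [c12 [c13 E1]]] := Hsp _ Sv.
have [c21 [c22 [c23 E2]]] := Hsp _ S1.
have [c31 [c32 [c33 E3]]] := Hsp _ S2.
have [c41 [c42 [c43 E4]]] := Hsp _ S3.
have [k0 [k1 [k2 [k3 [Hnz E]]]]] := dep4 E1 E2 E3 E4.
have [k0z|k0nz] := eqVneq k0 0.
  move: E; rewrite k0z scale0r add0r => E; have [h1 h2 h3] := Hind _ _ _ E.
  by move: Hnz; rewrite k0z h1 h2 h3 eqxx.
have [L [LD LZ LN Leq [La Lb Lc L0]]] := lc3_pack u1 u2 u3.
exists (- k0^-1 * k1), (- k0^-1 * k2), (- k0^-1 * k3).
move: E; rewrite La Lb Lc; repeat rewrite ?LD ?LZ ?LN.
rewrite -!addrA; repeat rewrite ?LD ?LZ ?LN.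
move/eqP; rewrite addr_eq0 LN => /eqP Ev.
rewrite -[v](scalerK k0nz) Ev LZ; apply: Leq; rewrite ?mulr0 ?mulr1; ring.
Qed.

Section Alg.
Variables (F : fieldType) (V : lmodType F) (mul : V -> V -> V).
Hypothesis Hc : comm_algebra mul.

Lemma mulC x y : mul x y = mul y x. Proof. by case: Hc. Qed.
Lemma mulDr x y z : mul x (y + z) = mul x y + mul x z. Proof. by case: Hc. Qed.
Lemma mulZr k x y : mul x (k *: y) = k *: mul x y. Proof. by case: Hc. Qed.
Lemma mulDl x y z : mul (y + z) x = mul y x + mul z x.
Proof. by rewrite !(mulC _ x) mulDr. Qed.
Lemma mulZl k x y : mul (k *: y) x = k *: mul y x.
Proof. by rewrite !(mulC _ x) mulZr. Qed.
Lemma mulr0 x : mul x 0 = 0.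
Proof. by have := mulZr 0 x 0; rewrite !scale0r. Qed.
Lemma mul0r x : mul 0 x = 0.
Proof. by rewrite mulC mulr0. Qed.
Lemma mulNr x y : mul x (- y) = - mul x y.
Proof. by rewrite -scaleN1r mulZr scaleN1r. Qed.
Lemma mulNl x y : mul (- y) x = - mul y x.
Proof. by rewrite -scaleN1r mulZl scaleN1r. Qed.
Lemma mulBr x y z : mul x (y - z) = mul x y - mul x z.
Proof. by rewrite mulDr mulNr. Qed.
Lemma mulBl x y z : mul (y - z) x = mul y x - mul z x.
Proof. by rewrite mulDl mulNl. Qed.

Lemma eig0 a l : eig mul a l 0. Proof. by rewrite /eig mul0r scaler0. Qed.
Lemma eigD a l x y : eig mul a l x -> eig mul a l y -> eig mul a l (x + y).
Proof. by rewrite /eig mulDl scalerDr => -> ->. Qed.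
Lemma eigZ a l k x : eig mul a l x -> eig mul a l (k *: x).
Proof. by rewrite /eig mulZl => ->; rewrite !scalerA mulrC. Qed.
Lemma eigN a l x : eig mul a l x -> eig mul a l (- x).
Proof. by rewrite -scaleN1r; apply: eigZ. Qed.
Lemma eigB a l x y : eig mul a l x -> eig mul a l y -> eig mul a l (x - y).
Proof. by move=> hx hy; apply: eigD => //; apply: eigN. Qed.

Hypothesis H2 : (2 : F) != 0.

Lemma n4 : (4 : F) != 0.
Proof. have -> : (4 : F) = 2 * 2 by ring. by rewrite mulf_neq0. Qed.
Lemma n8 : (8 : F) != 0.
Proof. have -> : (8 : F) = 2 * 4 by ring. by rewrite mulf_neq0 // n4. Qed.
Lemma n16 : (16 : F) != 0.
Proof. have -> : (16 : F) = 2 * 8 by ring. by rewrite mulf_neq0 // n8. Qed.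
Lemma n64 : (64 : F) != 0.
Proof. have -> : (64 : F) = 8 * 8 by ring. by rewrite mulf_neq0 // n8. Qed.

Ltac fld := field; rewrite ?n4 ?n8 ?n16 ?n64 ?H2 //.

Lemma scale_cancel (k : F) (x : V) : k != 0 -> k *: x = 0 -> x = 0.
Proof. by move=> hk /eqP; rewrite scaler_eq0 (negPf hk) => /eqP. Qed.

Lemma uniq3 a x1 x0 xh : eig mul a 1 x1 -> eig mul a 0 x0 -> eig mul a (2^-1) xh ->
  x1 + x0 + xh = 0 -> [/\ x1 = 0, x0 = 0 & xh = 0].
Proof.
move=> h1 h0 hh E.
have E1 : x1 + 2^-1 *: xh = 0.
  by have := congr1 (mul^~ a) E; rewrite !mulDl h1 h0 hh mul0r scale1r scale0r addr0.
have E2 : x1 + (2^-1 * 2^-1) *: xh = 0.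
  have := congr1 (mul^~ a) E1; rewrite !mulDl h1 mulZl hh scale1r mul0r scalerA.
  done.
have Eh : xh = 0.
  apply: (@scale_cancel (2^-1 - 2^-1 * 2^-1)).
    have -> : (2^-1 - 2^-1 * 2^-1 : F) = (2 * 2)^-1 by fld.
    by rewrite invr_eq0 mulf_neq0.
  have -> : (2^-1 - 2^-1 * 2^-1) *: xh = (x1 + 2^-1 *: xh) - (x1 + (2^-1 * 2^-1) *: xh).
    by rewrite scalerBl opprD addrACA subrr add0r.
  by rewrite E1 E2 subrr.
move: E1; rewrite Eh scaler0 addr0 => Ex1.
by move: E; rewrite Ex1 Eh !addr0 add0r.
Qed.

Lemma sub3 (x1 x0 xh y1 y0 yh : V) :
  (x1 + x0 + xh) - (y1 + y0 + yh) = (x1 - y1) + (x0 - y0) + (xh - yh).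
Proof. by rewrite !opprD addrACA (addrACA x1). Qed.

Lemma uniq3' a x1 x0 xh y1 y0 yh : eig mul a 1 x1 -> eig mul a 0 x0 -> eig mul a (2^-1) xh ->
  eig mul a 1 y1 -> eig mul a 0 y0 -> eig mul a (2^-1) yh ->
  x1 + x0 + xh = y1 + y0 + yh -> [/\ x1 = y1, x0 = y0 & xh = yh].
Proof.
move=> ? ? ? ? ? ? E.
have [] := @uniq3 a (x1 - y1) (x0 - y0) (xh - yh); try by apply: eigB.
  by rewrite -sub3 E subrr.
by move=> /subr0_eq -> /subr0_eq -> /subr0_eq ->.
Qed.


Lemma half_dec a : half_axis mul a -> forall x, exists k x0 xh,
  [/\ eig mul a 0 x0, eig mul a (2^-1) xh & x = k *: a + x0 + xh].
Proof.
case=> _ Hdec H1 _ x; have [x1 [x0 [xh [e1 e0 eh ->]]]] := Hdec x.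
by have [k ->] := (H1 x1).1 e1; exists k, x0, xh.
Qed.

Lemma a_eig1 a : half_axis mul a -> eig mul a 1 a.
Proof. by case=> E _ _ _; rewrite /eig E scale1r. Qed.

Lemma eig1_in a x : half_axis mul a -> eig mul a 1 x -> exists k, x = k *: a.
Proof. by case=> _ _ H1 _ /H1. Qed.

Lemma Aplus0 a : Aplus mul a 0.
Proof. by exists 0, 0; rewrite addr0; split => //; apply: eig0. Qed.
Lemma AplusD a x y : Aplus mul a x -> Aplus mul a y -> Aplus mul a (x + y).
Proof.
move=> [x1 [x0 [h1 h0 ->]]] [y1 [y0 [g1 g0 ->]]].
exists (x1 + y1), (x0 + y0); split; try apply: eigD => //.
by rewrite addrACA.
Qed.
Lemma AplusZ a k x : Aplus mul a x -> Aplus mul a (k *: x).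
Proof.
move=> [x1 [x0 [h1 h0 ->]]]; exists (k *: x1), (k *: x0); split; try apply: eigZ => //.
by rewrite scalerDr.
Qed.
Lemma AplusN a x : Aplus mul a x -> Aplus mul a (- x).
Proof. by rewrite -scaleN1r; apply: AplusZ. Qed.
Lemma Aplus1 a : half_axis mul a -> Aplus mul a a.
Proof. by move=> Ha; exists a, 0; rewrite addr0; split => //; [apply: a_eig1|apply: eig0]. Qed.
Lemma Aplus_of0 a x : eig mul a 0 x -> Aplus mul a x.
Proof. by move=> h; exists 0, x; rewrite add0r; split => //; apply: eig0. Qed.

Lemma pm_unique a p m p' m' : Aplus mul a p -> Aminus mul a m ->
  Aplus mul a p' -> Aminus mul a m' -> p + m = p' + m' -> p = p' /\ m = m'.
Proof.
move=> [x1 [x0 [h1 h0 ->]]] hm [y1 [y0 [g1 g0 ->]]] hm' E.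
by have [-> -> ->] := uniq3' h1 h0 hm g1 g0 hm' E.
Qed.

Lemma pm_dec a : half_axis mul a -> forall x, exists p m,
  [/\ Aplus mul a p, Aminus mul a m & x = p + m].
Proof.
case=> _ Hdec _ _ x; have [x1 [x0 [xh [e1 e0 eh ->]]]] := Hdec x.
by exists (x1 + x0), xh; split => //; exists x1, x0.
Qed.

Section Miy.
Variables (a : V) (t : V -> V).
Hypotheses (Ha : half_axis mul a) (Ht : miyamoto mul a t).

Lemma tD x y : t (x + y) = t x + t y.
Proof.
have [p [m [hp hm ->]]] := pm_dec Ha x; have [p' [m' [hp' hm' ->]]] := pm_dec Ha y.
have E : t ((p+p') + (m+m')) = (p+p') - (m+m') by apply: Ht; [apply: AplusD | apply: eigD].
by rewrite addrACA E !Ht // opprD addrACA.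
Qed.
Lemma tZ k x : t (k *: x) = k *: t x.
Proof.
have [p [m [hp hm ->]]] := pm_dec Ha x.
have E : t (k *: p + k *: m) = k *: p - k *: m by apply: Ht; [apply: AplusZ | apply: eigZ].
by rewrite scalerDr E Ht // scalerBr.
Qed.
Lemma tN x : t (- x) = - t x.
Proof. by rewrite -scaleN1r tZ scaleN1r. Qed.
Lemma tt x : t (t x) = x.
Proof.
have [p [m [hp hm ->]]] := pm_dec Ha x.
have E : t (p - m) = p - - m by apply: Ht => //; apply: eigN.
by rewrite Ht // E opprK.
Qed.
Lemma tM x y : t (mul x y) = mul (t x) (t y).
Proof.
case: Ha => _ _ _ [Fpp Fpm Fmm _].
have [p [m [hp hm ->]]] := pm_dec Ha x; have [p' [m' [hp' hm' ->]]] := pm_dec Ha y.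
have E1 := Ht hp hm. have E2 := Ht hp' hm'.
Timeout 10 rewrite E2 E1.
have Hp : Aplus mul a (mul p p' + mul m m') by apply: AplusD; [apply: Fpp | apply: Fmm].
have Hm : Aminus mul a (mul p m' + mul m p') by apply: eigD; [apply: Fpm | rewrite (mulC m p'); apply: Fpm].
have E3 := Ht Hp Hm.
have -> : mul (p + m) (p' + m') = (mul p p' + mul m m') + (mul p m' + mul m p').
  by rewrite !mulDl !mulDr [mul m p' + _]addrC addrACA.
Timeout 10 rewrite E3.
by rewrite !mulBl !mulBr opprB [RHS]addrACA opprD.
Qed.
Lemma t_fix x : Aplus mul a x -> t x = x.
Proof.
move=> hx; have E : t (x + 0) = x - 0 by apply: Ht => //; apply: eig0.
by rewrite addr0 subr0 in E.
Qed.
Lemma t_neg x : Aminus mul a x -> t x = - x.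
Proof.
move=> hx; have E : t (0 + x) = 0 - x by apply: Ht => //; apply: Aplus0.
by rewrite add0r sub0r in E.
Qed.

Lemma t_formula x : t x = x - 8 *: mul x a + 8 *: mul (mul x a) a.
Proof.
have [k [x0 [xh [h0 hh ->]]]] := half_dec Ha x.
have ha := a_eig1 Ha.
have Ex : mul (k *: a + x0 + xh) a = k *: a + 2^-1 *: xh.
  by rewrite !mulDl !mulZl ha h0 hh scale0r addr0 scale1r.
have Exx : mul (k *: a + 2^-1 *: xh) a = k *: a + (2^-1 * 2^-1) *: xh.
  by rewrite !mulDl !mulZl ha hh scale1r scalerA.
have E : t (k *: a + x0 + xh) = k *: a + x0 - xh.
  apply: Ht => //; apply: AplusD; [apply: AplusZ; apply: Aplus1 | apply: Aplus_of0] => //.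
rewrite E Ex Exx.
have [L [LD LZ LN Leq [La Lb Lc L0]]] := lc3_pack a x0 xh.
rewrite La Lb Lc; repeat rewrite ?LD ?LZ ?LN.
apply: Leq; fld.
Qed.
End Miy.

Lemma Aplus_transport g a p : (forall x y, g (mul x y) = mul (g x) (g y)) ->
  (forall k x, g (k *: x) = k *: g x) -> (forall x y, g (x + y) = g x + g y) ->
  Aplus mul a p -> Aplus mul (g a) (g p).
Proof.
move=> gM gZ gD [x1 [x0 [h1 h0 ->]]]; exists (g x1), (g x0); split; last by rewrite gD.
- by rewrite /eig -gM h1 gZ.
- by rewrite /eig -gM h0 gZ.
Qed.
Lemma eig_transport g a l y : (forall x y, g (mul x y) = mul (g x) (g y)) ->
  (forall k x, g (k *: x) = k *: g x) -> eig mul a l y -> eig mul (g a) l (g y).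
Proof. by move=> gM gZ h; rewrite /eig -gM h gZ. Qed.

Lemma braid a b ta tb : half_axis mul a -> half_axis mul b ->
  miyamoto mul a ta -> miyamoto mul b tb -> tb a = ta b ->
  forall x, tb (ta (tb x)) = ta (tb (ta x)).
Proof.
move=> Ha Hb Hta Htb E x.
have [p [m [hp hm Ex]]] := pm_dec Ha (tb x).
have [p' [m' [hp' hm' Ex']]] := pm_dec Hb (ta x).
rewrite Ex Ex' (Hta _ _ hp hm) (Htb _ _ hp' hm') (tD Hb Htb) (tD Ha Hta) (tN Hb Htb) (tN Ha Hta).
have Hx1 : x = tb p + tb m by rewrite -(tD Hb Htb) -Ex (tt Hb Htb).
have Hx2 : x = ta p' + ta m' by rewrite -(tD Ha Hta) -Ex' (tt Ha Hta).
have [] := @pm_unique (tb a) (tb p) (tb m) (ta p') (ta m').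
- by apply: Aplus_transport => //; [exact: (tM Hb Htb) | exact: (tZ Hb Htb) | exact: (tD Hb Htb)].
- by apply: eig_transport => //; [exact: (tM Hb Htb) | exact: (tZ Hb Htb)].
- by rewrite E; apply: Aplus_transport => //; [exact: (tM Ha Hta) | exact: (tZ Ha Hta) | exact: (tD Ha Hta)].
- by rewrite E; apply: eig_transport => //; [exact: (tM Ha Hta) | exact: (tZ Ha Hta)].
- by rewrite -Hx1 -Hx2.
by move=> -> ->.
Qed.

Lemma order3 a b ta tb : half_axis mul a -> half_axis mul b ->
  miyamoto mul a ta -> miyamoto mul b tb -> tb a = ta b -> a != b ->
  has_order (ta \o tb) 3.
Proof.
move=> Ha Hb Hta Htb E nab; split => //.
- move=> x /=; rewrite (braid Ha Hb Hta Htb E).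
  by repeat rewrite ?(tt Ha Hta) ?(tt Hb Htb).
- case=> [|[|[|m]]] //= _.
  + exists a; rewrite E (tt Ha Hta) => Eb; by rewrite Eb eqxx in nab.
  + exists b; rewrite (t_fix Htb (Aplus1 Hb)) -E (tt Hb Htb) (t_fix Hta (Aplus1 Ha)).
    by move=> Eab; rewrite Eab eqxx in nab.
Qed.

Lemma scale_inj (x : V) (k l : F) : x != 0 -> k *: x = l *: x -> k = l.
Proof.
move=> nx /eqP; rewrite -subr_eq0 -scalerBl scaler_eq0 (negPf nx) orbF subr_eq0.
by move/eqP.
Qed.

Lemma mul_dec a k x0 xh : half_axis mul a -> eig mul a 0 x0 -> eig mul a (2^-1) xh ->
  mul (k *: a + x0 + xh) a = k *: a + 2^-1 *: xh.
Proof.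
move=> Ha h0 hh; have ha := a_eig1 Ha.
by rewrite !mulDl !mulZl ha h0 hh scale0r addr0 scale1r.
Qed.

Lemma mul_dec2 a k xh : half_axis mul a -> eig mul a (2^-1) xh ->
  mul (k *: a + 2^-1 *: xh) a = k *: a + (2^-1 * 2^-1) *: xh.
Proof.
move=> Ha hh; have ha := a_eig1 Ha.
by rewrite !mulDl !mulZl ha hh scale1r scalerA.
Qed.

Section Sub.
Variable S : V -> Prop.
Hypothesis HS : subalgebra mul S.
Lemma sub0 : S 0. Proof. by case: HS. Qed.
Lemma subD x y : S x -> S y -> S (x + y). Proof. by case: HS => _ h _ _; apply: h. Qed.
Lemma subZ k x : S x -> S (k *: x). Proof. by case: HS => _ _ h _; apply: h. Qed.
Lemma subM x y : S x -> S y -> S (mul x y). Proof. by case: HS => _ _ _ h; apply: h. Qed.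
Lemma subN x : S x -> S (- x). Proof. by rewrite -scaleN1r; apply: subZ. Qed.
Lemma subB x y : S x -> S y -> S (x - y). Proof. by move=> hx hy; apply: subD => //; apply: subN. Qed.
End Sub.

Lemma Ngen_sub x y : subalgebra mul (Ngen mul x y).
Proof.
split.
- by move=> S HS _ _; apply: sub0.
- by move=> u v hu hv S HS Sx Sy; apply: subD => //; [apply: hu | apply: hv].
- by move=> k u hu S HS Sx Sy; apply: subZ => //; apply: hu.
- by move=> u v hu hv S HS Sx Sy; apply: subM => //; [apply: hu | apply: hv].
Qed.
Lemma Ngen_l x y : Ngen mul x y x. Proof. by move=> S _ h. Qed.
Lemma Ngen_r x y : Ngen mul x y y. Proof. by move=> S _ _ h. Qed.

Lemma comp_in S a y k y0 yh : subalgebra mul S -> half_axis mul a -> S a -> S y ->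
  eig mul a 0 y0 -> eig mul a (2^-1) yh -> y = k *: a + y0 + yh -> S y0 /\ S yh.
Proof.
move=> HS Ha Sa Sy h0 hh Ey.
have Syh : S yh.
  have -> : yh = 4 *: (mul y a - mul (mul y a) a).
    rewrite Ey mul_dec // mul_dec2 //.
    have [L [LD LZ LN Leq [La Lb Lc L0]]] := lc3_pack a y0 yh.
    rewrite La Lc; repeat rewrite ?LD ?LZ ?LN.
    by apply: Leq; fld.
  by apply: subZ => //; apply: subB => //; apply: subM => //; apply: subM.
split => //.
have -> : y0 = y - k *: a - yh.
  rewrite Ey.
  have [L [LD LZ LN Leq [La Lb Lc L0]]] := lc3_pack a y0 yh.
  rewrite La Lb Lc; repeat rewrite ?LD ?LZ ?LN.
  by apply: Leq; ring.
by apply: subB => //; apply: subB => //; apply: subZ.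
Qed.

Lemma mul_xy_x a y k y0 yh : half_axis mul a -> eig mul a 0 y0 -> eig mul a (2^-1) yh ->
  y = k *: a + y0 + yh -> mul (mul a y) a = 2^-1 *: mul a y + (k / 2) *: a.
Proof.
move=> Ha h0 hh Ey.
rewrite (mulC a y) Ey mul_dec // mul_dec2 //.
have [L [LD LZ LN Leq [La Lb Lc L0]]] := lc3_pack a y0 yh.
rewrite La Lc; repeat rewrite ?LD ?LZ ?LN.
by apply: Leq; fld.
Qed.

Lemma bsq_rel a b k b0 bh : half_axis mul a -> mul b b = b ->
  eig mul a 0 b0 -> eig mul a (2^-1) bh -> b = k *: a + b0 + bh ->
  exists xi q0, [/\ eig mul a 0 q0, mul bh bh = xi *: a + q0,
     (k ^+ 2 + xi) *: a = k *: a, mul b0 b0 + q0 = b0 &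
     k *: bh + 2 *: mul b0 bh = bh].
Proof.
move=> Ha Hbb h0 hh Eb.
have ha := a_eig1 Ha.
have Ha' := Ha; case: Ha' => _ _ _ [Fpp Fpm Fmm F00].
have [x1 [q0 [e1 e0 Eq]]] : Aplus mul a (mul bh bh) by apply: Fmm.
have [xi Exi] := eig1_in Ha e1.
exists xi, q0; rewrite Exi in Eq.
have hr : eig mul a (2^-1) (mul b0 bh) by apply: Fpm => //; apply: Aplus_of0.
have hs : eig mul a 0 (mul b0 b0) by apply: F00.
have E : (k ^+ 2 + xi) *: a + (mul b0 b0 + q0) + (k *: bh + 2 *: mul b0 bh) = k *: a + b0 + bh.
  rewrite -[in RHS]Eb -[in RHS]Hbb Eb.
  repeat rewrite ?mulDl ?mulDr ?mulZl ?mulZr.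
  have Ea : mul a a = a by rewrite ha scale1r.
  have Eab0 : mul a b0 = 0 by rewrite mulC h0 scale0r.
  have Eabh : mul a bh = 2^-1 *: bh by rewrite mulC hh.
  rewrite Ea Eab0 Eabh h0 hh (mulC bh b0) Eq.
  have [L [LD LZ LN Leq [L1 L2 L3 [L4 L5 L6]]]] := lc6_pack a b0 bh (mul b0 b0) (mul b0 bh) q0.
  rewrite ?scaler0 ?addr0 ?add0r.
  rewrite L4 L5 L6 L1 L2 L3; repeat rewrite ?LD ?LZ ?LN.
  apply: Leq; fld.
have f1 : eig mul a 1 ((k ^+ 2 + xi) *: a) by apply: eigZ.
have f2 : eig mul a 0 (mul b0 b0 + q0) by apply: eigD.
have f3 : eig mul a (2^-1) (k *: bh + 2 *: mul b0 bh) by apply: eigD; apply: eigZ.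
have f4 : eig mul a 1 (k *: a) by apply: eigZ.
have [-> -> ->] := uniq3' f1 f2 f3 f4 h0 hh E.
by split.
Qed.


Section Main.
Variables (a b e : V) (M : V -> Prop) (ta tb : V -> V).
Hypotheses (Ha : half_axis mul a) (Hb : half_axis mul b) (nab : a != b)
  (Hta : miyamoto mul a ta) (Htb : miyamoto mul b tb) (HM : subalgebra mul M) (Hd : dim3 M)
  (HN : forall v, Ngen mul a b v -> M v) (He : is_identity_of mul M e).

Lemma Ma : M a. Proof. by apply: HN; apply: Ngen_l. Qed.
Lemma Mb : M b. Proof. by apply: HN; apply: Ngen_r. Qed.
Lemma Me : M e. Proof. by case: He. Qed.
Lemma eM n : M n -> mul e n = n. Proof. by case: He => _; apply. Qed.
Lemma Eaa : mul a a = a. Proof. by case: Ha. Qed.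
Lemma Ebb : mul b b = b. Proof. by case: Hb. Qed.
Lemma Eea : mul e a = a. Proof. by apply: eM; apply: Ma. Qed.
Lemma Eeb : mul e b = b. Proof. by apply: eM; apply: Mb. Qed.
Lemma Eee : mul e e = e. Proof. by apply: eM; apply: Me. Qed.
Lemma Eae : mul a e = a. Proof. by rewrite mulC Eea. Qed.
Lemma Ebe : mul b e = b. Proof. by rewrite mulC Eeb. Qed.

Lemma tb_iff : tb a = ta b <-> a + 8 *: mul (mul a b) b = b + 8 *: mul (mul a b) a.
Proof.
rewrite (t_formula Hb Htb) (t_formula Ha Hta) (mulC b a) (addrAC a) (addrAC b).
split => E; last by rewrite E.
by apply: (addIr (- (8 *: mul a b))).
Qed.

Definition Pa := mul a b = - (3 / 8) *: e + 2^-1 *: a + 2^-1 *: b.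

Lemma Pa_b : Pa -> tb a = ta b.
Proof.
move=> E; apply/tb_iff; rewrite E.
repeat rewrite ?mulDl ?mulZl.
rewrite Eeb Ebb Eea Eaa (mulC b a) E.
have [L [LD LZ LN Leq [La Lb Lc L0]]] := lc3_pack a b e.
rewrite La Lb Lc; repeat rewrite ?LD ?LZ ?LN.
by apply: Leq; fld.
Qed.

Lemma nz_of_b : tb a = ta b -> a != 0 /\ b != 0.
Proof.
move/tb_iff => E; split.
  apply/eqP => a0; move: E nab; rewrite a0; repeat rewrite ?mul0r ?mulr0; rewrite ?scaler0 ?addr0 ?add0r.
  by move=> <-; rewrite eqxx.
apply/eqP => b0; move: E nab; rewrite b0; repeat rewrite ?mul0r ?mulr0; rewrite ?scaler0 ?addr0 ?add0r.
by move=> ->; rewrite eqxx.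
Qed.

Lemma b_beta k b0 bh : tb a = ta b -> eig mul a 0 b0 -> eig mul a (2^-1) bh ->
  b = k *: a + b0 + bh -> k = 4^-1.
Proof.
move=> Eb' h0 hh Eb.
have [na nb] := nz_of_b Eb'.
have [al [a0 [ah [g0 gh Ea]]]] := half_dec Hb a.
have Y := mul_xy_x Ha h0 hh Eb.
have X := mul_xy_x Hb g0 gh Ea.
move/tb_iff: Eb'; rewrite Y (mulC a b) X (mulC b a) => E'.
move/eqP: E'; rewrite -subr_eq0 => /eqP E'.
have E2 : (1 - 4 * k) *: a - (1 - 4 * al) *: b = 0.
  apply: etrans _ E'.
  have [L [LD LZ LN Leq [La Lb Lc L0]]] := lc3_pack a b (mul a b).
  rewrite Lc La Lb; repeat rewrite ?LD ?LZ ?LN.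
  by apply: Leq; fld.
have [k0|k0] := eqVneq (1 - 4 * k) 0.
  apply: (mulfI n4); rewrite mulfV ?n4 //.
  by move/eqP: k0; rewrite subr_eq0 eq_sym => /eqP.
exfalso.
have Eak : a = ((1 - 4 * al) / (1 - 4 * k)) *: b.
  move/eqP: E2; rewrite subr_eq0 => /eqP E2.
  by rewrite mulrC -scalerA -E2 scalerA mulVf // scale1r.
move: (Eaa); rewrite {1 2}Eak mulZl mulZr Ebb scalerA.
set q := (1 - 4 * al) / (1 - 4 * k) => Eq.
have : q * q = q.
  apply: (scale_inj nb); rewrite Eq Eak //.
move=> Hq; have : q * (q - 1) == 0 by rewrite mulrBr mulr1 Hq subrr.
rewrite mulf_eq0 subr_eq0 => /orP [/eqP q0|/eqP q1].
  by move: na; rewrite Eak -/q q0 scale0r eqxx.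
by move: nab; rewrite Eak -/q q1 scale1r eqxx.
Qed.


Lemma scale_eq0_nz (x : V) (k : F) : x != 0 -> k *: x = 0 -> k = 0.
Proof. by move=> nx /eqP; rewrite scaler_eq0 (negPf nx) orbF => /eqP. Qed.

Lemma Mc : M (e - a). Proof. by apply: subB => //; [apply: Me | apply: Ma]. Qed.
Lemma c0 : eig mul a 0 (e - a).
Proof. by rewrite /eig mulBl Eea Eaa subrr scale0r. Qed.
Lemma Ecc : mul (e - a) (e - a) = e - a.
Proof. by rewrite !mulBl !mulBr Eee Eae Eea Eaa subrr subr0. Qed.
Lemma cbh bh : M bh -> eig mul a (2^-1) bh -> mul (e - a) bh = 2^-1 *: bh.
Proof.
move=> Mbh hh; rewrite mulBl eM // mulC hh.
have [L [LD LZ LN Leq [La Lb Lc L0]]] := lc3_pack bh bh bh.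
rewrite La; repeat rewrite ?LD ?LZ ?LN.
by apply: Leq; fld.
Qed.

Lemma indep_acb bh : a != 0 -> e - a != 0 -> bh != 0 -> eig mul a (2^-1) bh ->
  forall x y z, x *: a + y *: (e - a) + z *: bh = 0 -> [/\ x = 0, y = 0 & z = 0].
Proof.
move=> na nc nh hh x y z E.
have [] := uniq3 (eigZ x (a_eig1 Ha)) (eigZ y c0) (eigZ z hh) E.
by move=> /(scale_eq0_nz na) -> /(scale_eq0_nz nc) -> /(scale_eq0_nz nh) ->.
Qed.

Lemma comp_from_Pa k b0 bh : eig mul a 0 b0 -> eig mul a (2^-1) bh ->
  b = k *: a + b0 + bh -> a != 0 -> Pa -> k = 4^-1 /\ b0 = (3/4) *: (e - a).
Proof.
move=> h0 hh Eb na HP.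
set c := e - a.
have hc : eig mul a 0 c := c0.
have Ee : e = c + a by rewrite /c subrK.
have E : k *: a + 0 + 2^-1 *: bh =
  (- (3/8) + 2^-1 + k / 2) *: a + (- (3/8) *: c + 2^-1 *: b0) + 2^-1 *: bh.
  rewrite addr0 -(mul_dec k Ha h0 hh) -Eb mulC HP.
  rewrite Ee Eb.
  have [L [LD LZ LN Leq [L1 L2 L3 [L4 L5 L6]]]] := lc6_pack a c bh b0 a a.
  rewrite L1 L2 L3 L4; repeat rewrite ?LD ?LZ ?LN.
  by apply: Leq; fld.
have [] := uniq3' (eigZ k (a_eig1 Ha)) (eig0 a 0) (eigZ _ hh)
   (eigZ _ (a_eig1 Ha)) (eigD (eigZ _ hc) (eigZ _ h0)) (eigZ _ hh) E.
move=> /(scale_inj na) Ek E0 _; split.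
  move: Ek => /eqP; rewrite -subr_eq0 => /eqP Ek.
  apply: (mulfI n4); rewrite mulfV ?n4 //.
  have -> : 4 * k = 1 + 8 * (k - (- (3/8) + 2^-1 + k/2)) by fld.
  by rewrite Ek GRing.mulr0 addr0.
move/eqP: E0; rewrite eq_sym addrC addr_eq0 => /eqP E0.
rewrite -[b0](scalerKV H2) E0 -scaleNr scalerA.
by congr (_ *: _); fld.
Qed.

Lemma Pa_from_comp k b0 bh : eig mul a 0 b0 -> eig mul a (2^-1) bh ->
  b = k *: a + b0 + bh -> k = 4^-1 -> b0 = (3/4) *: (e - a) -> Pa.
Proof.
move=> h0 hh Eb Ek Eb0.
rewrite /Pa (mulC a b) Eb mul_dec // Eb0 Ek.
set c := e - a.
have Ee : e = c + a by rewrite /c subrK.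
rewrite Ee.
have [L [LD LZ LN Leq [L1 L2 L3 L0]]] := lc3_pack a c bh.
rewrite L1 L2 L3; repeat rewrite ?LD ?LZ ?LN.
by apply: Leq; fld.
Qed.

Lemma b0_val k b0 bh : eig mul a 0 b0 -> eig mul a (2^-1) bh ->
  b = k *: a + b0 + bh -> a != 0 -> k = 4^-1 -> b0 = (3/4) *: (e - a).
Proof.
move=> h0 hh Eb na Ek.
have [Mb0 Mbh] := comp_in HM Ha Ma Mb h0 hh Eb.
have [xi [q0 [hq Ebh Ek2 Eb0 Eh]]] := bsq_rel Ha Ebb h0 hh Eb.
have [cz|cnz] := eqVneq (e - a) 0.
  have Ea : e = a by apply: subr0_eq.
  have E : k *: a + b0 + bh = k *: a + 0 + 2^-1 *: bh.
    by rewrite addr0 -(mul_dec k Ha h0 hh) -Eb -Ea mulC Eeb.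
  have [_ -> _] := uniq3' (eigZ k (a_eig1 Ha)) h0 hh (eigZ k (a_eig1 Ha)) (eig0 a 0) (eigZ _ hh) E.
  by rewrite cz scaler0.
have [hz|hnz] := eqVneq bh 0.
  have E1 : xi *: a + q0 + 0 = 0 by rewrite addr0 -Ebh hz mulr0.
  have [/(scale_eq0_nz na) xi0 _ _] := uniq3 (eigZ xi (a_eig1 Ha)) hq (eig0 _ _) E1.
  move: Ek2; rewrite xi0 addr0 => /(scale_inj na).
  rewrite Ek => E16.
  have h3 : (3 : F) = 0.
    have -> : (3 : F) = - 16 * ((4^-1) ^+ 2 - 4^-1) by fld.
    by rewrite E16 subrr GRing.mulr0.
  have h4 : (4^-1 : F) = 1.
    have -> : (4 : F) = 1 + 3 by ring.
    by rewrite h3 addr0 invr1.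
  have hab : eig mul b 1 a.
    rewrite /eig scale1r mulC Eb mul_dec // hz scaler0 addr0 Ek h4 scale1r //.
  have [q Eq] := eig1_in Hb hab.
  have E : a + 0 + 0 = (q * k) *: a + q *: b0 + 0.
    by rewrite !addr0 {1}Eq Eb hz addr0 scalerDr scalerA.
  have [E1' E2' _] := uniq3' (a_eig1 Ha) (eig0 a 0) (eig0 a _) (eigZ _ (a_eig1 Ha)) (eigZ q h0) (eig0 a _) E.
  have qnz : q != 0.
    apply/eqP=> q0'; move: E1'; rewrite q0' GRing.mul0r scale0r => /eqP.
    by rewrite (negPf na).
  move/esym: E2' => /eqP; rewrite scaler_eq0 (negPf qnz) /= => /eqP ->.
  by rewrite h3 GRing.mul0r scale0r.
have [x [y [z Eb0']]] := span3 Hd Ma Mc Mbh (indep_acb na cnz hnz hh) Mb0.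
have E : 0 + b0 + 0 = x *: a + y *: (e - a) + z *: bh by rewrite add0r addr0.
have [_ Eb0y _] := uniq3' (eig0 a 1) h0 (eig0 a _) (eigZ x (a_eig1 Ha)) (eigZ y c0) (eigZ z hh) E.
move: Eh; rewrite Eb0y mulZl (cbh Mbh hh) !scalerA -scalerDl.
rewrite -{2}[bh]scale1r => /(scale_inj hnz) Eky.
congr (_ *: _).
have -> : y = (k + 2 * y / 2) - k by fld.
by rewrite Eky Ek; fld.
Qed.

Lemma part1 : Pa <-> tb a = ta b.
Proof.
split; first exact: Pa_b.
move=> Eb'; have [na nb] := nz_of_b Eb'.
have [k [b0 [bh [h0 hh Eb]]]] := half_dec Ha b.
have Ek := b_beta Eb' h0 hh Eb.
exact: (Pa_from_comp h0 hh Eb Ek (b0_val h0 hh Eb na Ek)).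
Qed.

Lemma three0 : (4^-1 : F) ^+ 2 = 4^-1 -> (3 : F) = 0.
Proof.
move=> E16; have -> : (3 : F) = - 16 * ((4^-1) ^+ 2 - 4^-1) by fld.
by rewrite E16 subrr GRing.mulr0.
Qed.
Lemma inv4_1 : (3 : F) = 0 -> (4^-1 : F) = 1.
Proof.
move=> h3; have -> : (4 : F) = 1 + 3 by ring.
by rewrite h3 addr0 invr1.
Qed.

Lemma Pa_facts : Pa -> exists bh, [/\ eig mul a (2^-1) bh, bh != 0, e - a != 0, a != 0 &
   b = 4^-1 *: a + (3/4) *: (e - a) + bh].
Proof.
move=> HP; have [na nb] := nz_of_b (Pa_b HP).
have [k [b0 [bh [h0 hh Eb]]]] := half_dec Ha b.
have [Ek Eb0] := comp_from_Pa h0 hh Eb na HP.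
have Eb' : b = 4^-1 *: a + (3/4) *: (e - a) + bh by rewrite Eb Ek Eb0.
have [xi [q0 [hq Ebh Ek2 _ _]]] := bsq_rel Ha Ebb h0 hh Eb.
have hnz : bh != 0.
  apply/eqP => hz.
  have E1 : xi *: a + q0 + 0 = 0 by rewrite addr0 -Ebh hz mulr0.
  have [/(scale_eq0_nz na) xi0 _ _] := uniq3 (eigZ xi (a_eig1 Ha)) hq (eig0 _ _) E1.
  move: Ek2; rewrite xi0 addr0 => /(scale_inj na); rewrite Ek => /three0 h3.
  move: nab; rewrite Eb' hz addr0 (inv4_1 h3) h3 GRing.mul0r scale0r addr0 scale1r.
  by rewrite eqxx.
exists bh; split => //.
apply/eqP => cz.
have Ea : e = a by apply: subr0_eq.
have E : k *: a + b0 + bh = k *: a + 0 + 2^-1 *: bh.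
  by rewrite addr0 -(mul_dec k Ha h0 hh) -Eb -Ea mulC Eeb.
have [_ _ Eh] := uniq3' (eigZ k (a_eig1 Ha)) h0 hh (eigZ k (a_eig1 Ha)) (eig0 a 0) (eigZ _ hh) E.
have H0 : (1 - 2^-1 : F) *: bh = 0 by rewrite scalerBl scale1r -Eh subrr.
have := scale_eq0_nz hnz H0.
have -> : (1 - 2^-1 : F) = 2^-1 by fld.
by move/eqP; rewrite invr_eq0 (negPf H2).
Qed.

Lemma indep_abe : Pa -> forall x y z, x *: a + y *: b + z *: e = 0 -> [/\ x = 0, y = 0 & z = 0].
Proof.
move=> HP x y z E.
have [bh [hh hnz cnz na Eb]] := Pa_facts HP.
have Ee : e = (e - a) + a by rewrite subrK.
have E' : (x + y / 4 + z) *: a + (3 * y / 4 + z) *: (e - a) + y *: bh = 0.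
  apply: etrans _ E.
  set c := e - a in Eb Ee *.
  rewrite Eb Ee.
  have [L [LD LZ LN Leq [L1 L2 L3 L0]]] := lc3_pack a c bh.
  rewrite L1 L2 L3; repeat rewrite ?LD ?LZ ?LN.
  by apply: Leq; fld.
have [e1 e2 e3] := indep_acb na cnz hnz hh E'.
move: e2 e1; rewrite e3 GRing.mulr0 GRing.mul0r add0r => ->.
by rewrite !addr0 => ->.
Qed.

Definition S3 v := exists x y z, v = x *: a + y *: b + z *: e.

Lemma Eba : Pa -> mul b a = - (3 / 8) *: e + 2^-1 *: a + 2^-1 *: b.
Proof. by move=> HP; rewrite mulC. Qed.

Lemma S3_sub : Pa -> subalgebra mul S3.
Proof.
move=> HP.
split.
- by exists 0, 0, 0; rewrite !scale0r !addr0.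
- move=> u v [x [y [z ->]]] [x' [y' [z' ->]]]; exists (x + x'), (y + y'), (z + z').
  have [L [LD LZ LN Leq [L1 L2 L3 L0]]] := lc3_pack a b e.
  rewrite L1 L2 L3; repeat rewrite ?LD ?LZ ?LN.
  by apply: Leq; ring.
- move=> k u [x [y [z ->]]]; exists (k * x), (k * y), (k * z).
  have [L [LD LZ LN Leq [L1 L2 L3 L0]]] := lc3_pack a b e.
  rewrite L1 L2 L3; repeat rewrite ?LD ?LZ ?LN.
  by apply: Leq; ring.
- move=> u v [x [y [z ->]]] [x' [y' [z' ->]]].
  exists (x * x' + x * z' + z * x' + (x * y' + y * x') / 2),
    (y * y' + y * z' + z * y' + (x * y' + y * x') / 2),
    (z * z' - 3 / 8 * (x * y' + y * x')).
  repeat rewrite ?mulDl ?mulDr ?mulZl ?mulZr.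
  rewrite Eaa Ebb Eee Eae Ebe Eea Eeb HP (Eba HP).
  have [L [LD LZ LN Leq [L1 L2 L3 L0]]] := lc3_pack a b e.
  rewrite L1 L2 L3; repeat rewrite ?LD ?LZ ?LN.
  by apply: Leq; fld.
Qed.

Lemma S3_a : S3 a. Proof. by exists 1, 0, 0; rewrite scale1r !scale0r !addr0. Qed.
Lemma S3_b : S3 b. Proof. by exists 0, 1, 0; rewrite scale1r !scale0r add0r addr0. Qed.
Lemma S3_eb : S3 (e - b).
Proof. by exists 0, (-1), 1; rewrite scale1r scale0r add0r scaleN1r addrC. Qed.

Lemma NS3 v : Pa -> Ngen mul a b v -> S3 v.
Proof. by move=> HP Hv; apply: Hv; [apply: S3_sub | apply: S3_a | apply: S3_b]. Qed.
Lemma N'S3 v : Pa -> Ngen mul a (e - b) v -> S3 v.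
Proof. by move=> HP Hv; apply: Hv; [apply: S3_sub | apply: S3_a | apply: S3_eb]. Qed.
Lemma S3_N (N : V -> Prop) v : subalgebra mul N -> N a -> N b -> N e -> S3 v -> N v.
Proof.
move=> HN' Na Nb Ne [x [y [z ->]]].
by apply: (subD HN'); [apply: (subD HN')|]; apply: (subZ HN').
Qed.

Lemma Fe : Pa -> mul a (e - b) = - (1 / 8) *: e + 2^-1 *: a + 2^-1 *: (e - b).
Proof.
move=> HP; rewrite mulBr Eae HP.
have [L [LD LZ LN Leq [L1 L2 L3 L0]]] := lc3_pack a b e.
rewrite L1 L2 L3; repeat rewrite ?LD ?LZ ?LN.
by apply: Leq; fld.
Qed.

Lemma Ne3 : (3 : F) != 0 -> Pa -> Ngen mul a b e.
Proof.
move=> h3 HP.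
have -> : e = (3 / 8)^-1 *: (2^-1 *: a + 2^-1 *: b - mul a b).
  rewrite HP.
  have [L [LD LZ LN Leq [L1 L2 L3 L0]]] := lc3_pack a b e.
  rewrite L1 L2 L3; repeat rewrite ?LD ?LZ ?LN.
  by apply: Leq; field; rewrite ?n4 ?n8 ?n16 ?n64 ?H2 ?h3.
have HS := @Ngen_sub a b.
apply: (subZ HS); apply: (subB HS); last by apply: (subM HS); [apply: Ngen_l | apply: Ngen_r].
by apply: (subD HS); apply: (subZ HS); [apply: Ngen_l | apply: Ngen_r].
Qed.

Lemma Ne' : Pa -> Ngen mul a (e - b) e.
Proof.
move=> HP.
have Ee : e = 8 *: (2^-1 *: a + 2^-1 *: (e - b) - mul a (e - b)).
  rewrite (Fe HP).
  have [L [LD LZ LN Leq [L1 L2 L3 L0]]] := lc3_pack a b e.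
  rewrite L1 L2 L3; repeat rewrite ?LD ?LZ ?LN.
  by apply: Leq; fld.
rewrite {2}Ee.
have HS := @Ngen_sub a (e - b).
apply: (subZ HS); apply: (subB HS); last by apply: (subM HS); [apply: Ngen_l | apply: Ngen_r].
by apply: (subD HS); apply: (subZ HS); [apply: Ngen_l | apply: Ngen_r].
Qed.

Lemma Nb' : Pa -> Ngen mul a (e - b) b.
Proof.
move=> HP; have Eb : b = e - (e - b) by rewrite opprB addrC subrK.
rewrite {2}Eb.
by apply: (subB (@Ngen_sub a (e - b))); [apply: Ne' | apply: Ngen_r].
Qed.

Lemma part2 : Pa -> [/\ has_order (ta \o tb) 3,
   (3 : F) != 0 -> is_identity_of mul (Ngen mul a b) e /\ (forall v, Ngen mul a b v <-> M v) &
   half_axis mul (e - b) ->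
     [/\ dim3 (Ngen mul a (e - b)),
         mul a (e - b) = - (1 / 8) *: e + 2^-1 *: a + 2^-1 *: (e - b),
         (3 : F) != 0 -> forall v, Ngen mul a (e - b) v <-> Ngen mul a b v &
         (3 : F) = 0 ->
           (forall v, Ngen mul a b v -> Ngen mul a (e - b) v) /\
           exists v, Ngen mul a (e - b) v /\ ~ Ngen mul a b v]].
Proof.
move=> HP; split.
- exact: (order3 Ha Hb Hta Htb (Pa_b HP) nab).
- move=> h3; split.
    by split; [apply: Ne3 | move=> n /HN Mn; apply: eM].
  move=> v; split; first exact: HN.
  move=> Mv; have [x [y [z ->]]] := span3 Hd Ma Mb Me (indep_abe HP) Mv.
  apply: (S3_N (@Ngen_sub a b) (@Ngen_l a b) (@Ngen_r a b) (Ne3 h3 HP)).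
  by exists x, y, z.
move=> _; split.
- exists a, b, e; split.
  + exact: Ngen_l.
  + exact: Nb'.
  + exact: Ne'.
  + exact: indep_abe.
  + by move=> v /(N'S3 HP).
- exact: Fe.
- move=> h3 v; split => Hv.
    apply: (S3_N (@Ngen_sub a b) (@Ngen_l a b) (@Ngen_r a b) (Ne3 h3 HP)).
    exact: N'S3.
  apply: (S3_N (@Ngen_sub a (e - b)) (@Ngen_l a (e - b)) (Nb' HP) (Ne' HP)).
  exact: NS3.
move=> h3; split.
  move=> v Hv; apply: (S3_N (@Ngen_sub a (e - b)) (@Ngen_l a (e - b)) (Nb' HP) (Ne' HP)).
  exact: NS3.
exists e; split; first exact: Ne'.
move=> Ne.
pose T v := exists x y, v = x *: a + y *: b.
have HP' : mul a b = 2^-1 *: a + 2^-1 *: b.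
  by rewrite HP h3 GRing.mul0r oppr0 scale0r add0r.
have HT : subalgebra mul T.
  split.
  - by exists 0, 0; rewrite !scale0r addr0.
  - move=> u v [x [y ->]] [x' [y' ->]]; exists (x + x'), (y + y').
    have [L [LD LZ LN Leq [L1 L2 L3 L0]]] := lc3_pack a b e.
    rewrite L1 L2; repeat rewrite ?LD ?LZ ?LN.
    by apply: Leq; ring.
  - move=> k u [x [y ->]]; exists (k * x), (k * y).
    have [L [LD LZ LN Leq [L1 L2 L3 L0]]] := lc3_pack a b e.
    rewrite L1 L2; repeat rewrite ?LD ?LZ ?LN.
    by apply: Leq; ring.
  - move=> u v [x [y ->]] [x' [y' ->]].
    exists (x * x' + (x * y' + y * x') / 2), (y * y' + (x * y' + y * x') / 2).
    repeat rewrite ?mulDl ?mulDr ?mulZl ?mulZr.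
    rewrite Eaa Ebb HP' (mulC b a) HP'.
    have [L [LD LZ LN Leq [L1 L2 L3 L0]]] := lc3_pack a b e.
    rewrite L1 L2; repeat rewrite ?LD ?LZ ?LN.
    by apply: Leq; fld.
have [x [y Ee]] : T e.
  apply: (Ne T HT).
    by exists 1, 0; rewrite scale1r scale0r addr0.
  by exists 0, 1; rewrite scale1r scale0r add0r.
have Hz : x *: a + y *: b + (-1) *: e = 0 by rewrite scaleN1r -Ee subrr.
have [_ _] := indep_abe HP Hz.
by move/eqP; rewrite oppr_eq0 oner_eq0.
Qed.
End Main.
End Alg.

Unset Implicit Arguments.

Theorem lemma3p20 (F : fieldType) (V : lmodType F) (mul : V -> V -> V)
    (a b e : V) (M : V -> Prop) (ta tb : V -> V) :
  (2 : F) != 0 ->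
  comm_algebra mul ->
  primitive_axial_half mul ->
  half_axis mul a -> half_axis mul b -> a != b ->
  miyamoto mul a ta -> miyamoto mul b tb ->
  subalgebra mul M -> dim3 M ->
  (forall v, Ngen mul a b v -> M v) ->
  is_identity_of mul M e ->
  (mul a b = - (3 / 8) *: e + 2^-1 *: a + 2^-1 *: b <-> tb a = ta b) /\
  (mul a b = - (3 / 8) *: e + 2^-1 *: a + 2^-1 *: b ->
    [/\ has_order (ta \o tb) 3,
        (3 : F) != 0 ->
          is_identity_of mul (Ngen mul a b) e /\ (forall v, Ngen mul a b v <-> M v) &
        half_axis mul (e - b) ->
          [/\ dim3 (Ngen mul a (e - b)),
              mul a (e - b) = - (1 / 8) *: e + 2^-1 *: a + 2^-1 *: (e - b),
              (3 : F) != 0 -> forall v, Ngen mul a (e - b) v <-> Ngen mul a b v &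
              (3 : F) = 0 ->
                (forall v, Ngen mul a b v -> Ngen mul a (e - b) v) /\
                exists v, Ngen mul a (e - b) v /\ ~ Ngen mul a b v]]).
Proof.
move=> H2 Hc _ Ha Hb nab Hta Htb HM Hd HN He; split.
- exact: (part1 Hc H2 Ha Hb nab Hta Htb HM Hd HN He).
- exact: (part2 Hc H2 Ha Hb nab Hta Htb Hd HN He).
Qed.
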